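(* Let $\mathfrak g$ be a Leibniz algebra, $U=U(\mathfrak g_{Lie})$ the (unital) universal enveloping algebra of $\mathfrak g_{Lie}$, and $x\mapsto\bar x$ the canonical map $\mathfrak g\to\mathfrak g_{Lie}\subset U$. Then $M:=U\otimes\mathfrak g$ is a $U$-bimodule, with left action by multiplication on the left factor and right action determined by $(\omega\otimes x)\cdot\bar y=\omega\otimes[x,y]+\omega\bar y\otimes x$ ($\omega\in U$, $x,y\in\mathfrak g$); the map $f:M\to U$, $f(\omega\otimes x)=\omega\bar x$, is a $U$-bimodule map; and $M$ with the products $m\dashv m'=m\cdot f(m')$, $m\vdash m'=f(m)\cdot m'$ is a dialgebra. Moreover there is an isomorphism of dialgebras $Ud(\mathfrak g)\cong U(\mathfrak g_{Lie})\otimes\mathfrak g$ sending the class of $\omega\otimes x\otimes 1$ ($\omega\in T(\mathfrak g)$, $x\in\mathfrak g$) to $\bar\omega\otimes x$, where $\bar\omega$ is the image of $\omega$ in $U$.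
   Context: A (right) Leibniz algebra is a vector space $\mathfrak g$ with bracket satisfying $[x,[y,z]]=[[x,y],z]-[[x,z],y]$; $\mathfrak g_{Lie}$ is its quotient by the ideal generated by all $[x,x]$. A dialgebra is a vector space with bilinear $\dashv,\vdash$ satisfying $(x\dashv y)\dashv z=x\dashv(y\vdash z)=x\dashv(y\dashv z)$, $(x\vdash y)\dashv z=x\vdash(y\dashv z)$, $(x\dashv y)\vdash z=x\vdash(y\vdash z)=(x\vdash y)\vdash z$. $Ud(\mathfrak g)$ is the quotient of the free dialgebra $T(\mathfrak g)\otimes\mathfrak g\otimes T(\mathfrak g)$ (products $(u\otimes v\otimes w)\dashv(u'\otimes v'\otimes w')=u\otimes v\otimes wu'v'w'$, $(u\otimes v\otimes w)\vdash(u'\otimes v'\otimes w')=uvwu'\otimes v'\otimes w'$) by the ideal generated by $[x,y]-x\dashv y+y\vdash x$, $x,y\in\mathfrak g$. *)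

(* Defs.v *)
(* Multilinear-algebra objects (tensor products, tensor
   algebra, universal enveloping algebra, quotients) are specified by their
   defining universal properties / first-isomorphism characterisation. *)
From HB Require Import structures.
From mathcomp Require Import all_boot all_order all_algebra.
Set Implicit Arguments. Unset Strict Implicit. Unset Printing Implicit Defensive.
Import GRing.Theory.
Local Open Scope ring_scope.

Section Defs.
Variable K : fieldType.

Definition lin (V W : lmodType K) (f : V -> W) :=
  forall a x y, f (a *: x + y) = a *: f x + f y.
Definition bilin (U V W : lmodType K) (b : U -> V -> W) :=
  (forall y, lin (fun x => b x y)) /\ (forall x, lin (b x)).
Definition trilin (U V W Z : lmodType K) (b : U -> V -> W -> Z) :=
  (forall y z, lin (fun x => b x y z)) /\ (forall x z, lin (fun y => b x y z))
  /\ (forall x y, lin (b x y)).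
Definition subspace (V : lmodType K) (S : V -> Prop) :=
  S 0 /\ forall a x y, S x -> S y -> S (a *: x + y).

Definition leibniz_algebra (g : lmodType K) (br : g -> g -> g) :=
  bilin br /\ forall x y z, br x (br y z) = br (br x y) z - br (br x z) y.

Definition ideal_gen (g : lmodType K) (br : g -> g -> g) (S : g -> Prop) (x : g) :=
  forall I : g -> Prop, subspace I ->
    (forall a b, I a -> I (br a b) /\ I (br b a)) ->
    (forall s, S s -> I s) -> I x.

(* pi : g -> L is the quotient g -> g_Lie = g / <[x,x]>, brL the induced bracket *)
Definition is_Lie_quotient (g : lmodType K) (br : g -> g -> g)
    (L : lmodType K) (brL : L -> L -> L) (pi : g -> L) :=
  lin pi /\ (forall y, exists x, pi x = y) /\
  (forall x y, pi (br x y) = brL (pi x) (pi y)) /\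
  (forall x, pi x = 0 <-> ideal_gen br (fun s => exists z, s = br z z) x).

Definition alg_hom (A B : algType K) (f : A -> B) :=
  lin f /\ f 1 = 1 /\ forall x y, f (x * y) = f x * f y.

Definition lie_map (L : lmodType K) (brL : L -> L -> L) (A : algType K) (phi : L -> A) :=
  lin phi /\ forall a b, phi (brL a b) = phi a * phi b - phi b * phi a.

Definition is_UEA (L : lmodType K) (brL : L -> L -> L) (U : algType K) (j : L -> U) :=
  lie_map brL j /\
  forall (A : algType K) (phi : L -> A), lie_map brL phi ->
    exists Phi : U -> A, alg_hom Phi /\ (forall a, Phi (j a) = phi a) /\
      forall Psi : U -> A, alg_hom Psi -> (forall a, Psi (j a) = phi a) ->
        forall u, Psi u = Phi u.

Definition is_tensor_alg (g : lmodType K) (T : algType K) (tau : g -> T) :=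
  lin tau /\
  forall (A : algType K) (phi : g -> A), lin phi ->
    exists Phi : T -> A, alg_hom Phi /\ (forall a, Phi (tau a) = phi a) /\
      forall Psi : T -> A, alg_hom Psi -> (forall a, Psi (tau a) = phi a) ->
        forall u, Psi u = Phi u.

Definition is_tensor2 (V W P : lmodType K) (t : V -> W -> P) :=
  bilin t /\
  forall (Z : lmodType K) (b : V -> W -> Z), bilin b ->
    exists h : P -> Z, lin h /\ (forall v w, h (t v w) = b v w) /\
      forall h' : P -> Z, lin h' -> (forall v w, h' (t v w) = b v w) ->
        forall p, h' p = h p.

Definition is_tensor3 (V1 V2 V3 P : lmodType K) (t : V1 -> V2 -> V3 -> P) :=
  trilin t /\
  forall (Z : lmodType K) (b : V1 -> V2 -> V3 -> Z), trilin b ->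
    exists h : P -> Z, lin h /\ (forall u v w, h (t u v w) = b u v w) /\
      forall h' : P -> Z, lin h' -> (forall u v w, h' (t u v w) = b u v w) ->
        forall p, h' p = h p.

(* dialgebras: dl = "-|", dr = "|-" *)
Definition dialgebra (D : lmodType K) (dl dr : D -> D -> D) :=
  bilin dl /\ bilin dr /\
  forall x y z,
    [/\ dl (dl x y) z = dl x (dr y z), dl x (dr y z) = dl x (dl y z),
        dl (dr x y) z = dr x (dl y z),
        dr (dl x y) z = dr x (dr y z) & dr x (dr y z) = dr (dr x y) z].

Definition dialg_hom (D E : lmodType K) (dlD drD : D -> D -> D)
    (dlE drE : E -> E -> E) (f : D -> E) :=
  lin f /\ (forall x y, f (dlD x y) = dlE (f x) (f y)) /\
  (forall x y, f (drD x y) = drE (f x) (f y)).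

Definition dideal_gen (D : lmodType K) (dl dr : D -> D -> D) (S : D -> Prop) (d : D) :=
  forall I : D -> Prop, subspace I ->
    (forall a b, I a -> I (dl a b) /\ I (dl b a) /\ I (dr a b) /\ I (dr b a)) ->
    (forall s, S s -> I s) -> I d.

(* the free dialgebra T(g) (x) g (x) T(g): its two products *)
Definition free_dialg_products (g : lmodType K) (T : algType K) (tau : g -> T)
    (F : lmodType K) (t3 : T -> g -> T -> F) (fdl fdr : F -> F -> F) :=
  bilin fdl /\ bilin fdr /\
  (forall u v w u' v' w',
      fdl (t3 u v w) (t3 u' v' w') = t3 u v (w * u' * tau v' * w')) /\
  (forall u v w u' v' w',
      fdr (t3 u v w) (t3 u' v' w') = t3 (u * tau v * w * u') v' w').

(* (Q, qdl, qdr) with q : F -> Q is the quotient Ud(g) of the free dialgebra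
   by the ideal generated by [x,y] - x -| y + y |- x *)
Definition is_Ud_quotient (g : lmodType K) (br : g -> g -> g) (T : algType K)
    (F : lmodType K) (t3 : T -> g -> T -> F) (fdl fdr : F -> F -> F)
    (Q : lmodType K) (qdl qdr : Q -> Q -> Q) (q : F -> Q) :=
  dialgebra qdl qdr /\ dialg_hom fdl fdr qdl qdr q /\
  (forall y, exists x, q x = y) /\
  (forall d, q d = 0 <->
     dideal_gen fdl fdr
       (fun s => exists x y : g, s = t3 1 (br x y) 1 - fdl (t3 1 x 1) (t3 1 y 1)
                                     + fdr (t3 1 y 1) (t3 1 x 1)) d).

Definition bimodule (U : algType K) (M : lmodType K) (l : U -> M -> M) (r : M -> U -> M) :=
  bilin l /\ bilin r /\
  (forall m, l 1 m = m) /\ (forall u v m, l (u * v) m = l u (l v m)) /\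
  (forall m, r m 1 = m) /\ (forall m u v, r m (u * v) = r (r m u) v) /\
  (forall u m v, l u (r m v) = r (l u m) v).

Definition bimodule_map (U : algType K) (M : lmodType K) (l : U -> M -> M) (r : M -> U -> M)
    (f : M -> U) :=
  lin f /\ (forall u m, f (l u m) = u * f m) /\ (forall m u, f (r m u) = f m * u).

End Defs.

(* Main.v *)
Require Import Defs.
From HB Require Import structures.
From mathcomp Require Import all_boot all_order all_algebra.
From mathcomp Require Import boolp.
Set Implicit Arguments. Unset Strict Implicit. Unset Printing Implicit Defensive.
Import GRing.Theory.
Local Open Scope ring_scope.

Section LinFacts.
Variable K : fieldType.
Variables (V W : lmodType K) (f : V -> W) (Hf : lin f).
Lemma lin0 : f 0 = 0.
Proof. have := Hf 1 0 0; rewrite !scale1r !addr0 => /(congr1 (fun z => z - f 0)). by rewrite subrr addrK => <-. Qed.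
Lemma linD x y : f (x + y) = f x + f y.
Proof. by have := Hf 1 x y; rewrite !scale1r. Qed.
Lemma linZ a x : f (a *: x) = a *: f x.
Proof. by have := Hf a x 0; rewrite !addr0 lin0 addr0. Qed.
Lemma linN x : f (- x) = - f x.
Proof. by rewrite -scaleN1r linZ scaleN1r. Qed.
Lemma linB x y : f (x - y) = f x - f y.
Proof. by rewrite linD linN. Qed.
End LinFacts.

Section Endo.
Variable K : fieldType.
Variable V : lmodType K.
Record cpred := CPred {
  cp :> (V -> V) -> Prop;
  cp_id : cp id;
  cp_comp : forall f g, cp f -> cp g -> cp (fun v => f (g v));
  cp0 : cp (fun _ => 0);
  cp_lc : forall a f g, lin f -> lin g -> cp f -> cp g -> cp (fun v => a *: f v + g v) }.
Variables (S : cpred) (rv : bool).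

Record endo_ := Endo { ef : V -> V; ec : K; ep : lin ef /\ S ef }.
Definition endoT (b : bool) := endo_.
Local Notation endo := (endoT rv).

Lemma endo_ext (f g : endo) : (forall v, ef f v = ef g v) -> ec f = ec g -> f = g.
Proof.
case: f => f c p; case: g => g c' p' /= H Hc.
have Efg : f = g by apply: funext.
subst; congr Endo; exact: Prop_irrelevance.
Qed.

HB.instance Definition _ := gen_eqMixin endo.
HB.instance Definition _ := gen_choiceMixin endo.

Lemma lin_id : lin (@id V). Proof. by []. Qed.
Lemma lin_comp (f g : V -> V) : lin f -> lin g -> lin (fun v => f (g v)).
Proof. by move=> Hf Hg a x y; rewrite Hg Hf. Qed.
Lemma lin_zero : lin (fun _ : V => (0:V)).
Proof. by move=> a x y; rewrite scaler0 addr0. Qed.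
Lemma lin_lc a (f g : V -> V) : lin f -> lin g -> lin (fun v => a *: f v + g v).
Proof.
move=> Hf Hg b x y; rewrite Hf Hg !scalerDr !scalerA [a * b]mulrC.
rewrite -!addrA; congr (_ + _); by rewrite addrCA.
Qed.

Definition e0 : endo := Endo 0 (conj lin_zero (cp0 S)).
Definition elc (a : K) (f g : endo) : endo :=
  Endo (a * ec f + ec g)
   (conj (lin_lc a (proj1 (ep f)) (proj1 (ep g)))
         (cp_lc a (proj1 (ep f)) (proj1 (ep g)) (proj2 (ep f)) (proj2 (ep g)))).
Definition eadd f g := elc 1 f g.
Definition eopp f := elc (-1) f e0.
Definition escale a f := elc a f e0.
Definition eone : endo := Endo 1 (conj lin_id (cp_id S)).
Definition ecomp (f g : endo) : endo :=
  Endo (ec f * ec g) (conj (lin_comp (proj1 (ep f)) (proj1 (ep g)))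
         (cp_comp (proj2 (ep f)) (proj2 (ep g)))).
Definition emul f g := if rv then ecomp g f else ecomp f g.

Lemma eaddA : associative eadd.
Proof. move=> f g h; apply: endo_ext => /=; intros; by rewrite ?scale1r ?mul1r addrA. Qed.
Lemma eaddC : commutative eadd.
Proof. move=> f g; apply: endo_ext => /=; intros; by rewrite ?scale1r ?mul1r addrC. Qed.
Lemma eadd0 : left_id e0 eadd.
Proof. move=> f; apply: endo_ext => /=; intros; by rewrite ?scale1r ?mul1r ?mulr0 !add0r ?addr0. Qed.
Lemma eaddN : left_inverse e0 eopp eadd.
Proof. move=> f; apply: endo_ext => /=; intros; by rewrite ?mulr0 !addr0 ?mul1r ?scale1r ?scaleN1r ?mulN1r addNr. Qed.

Lemma emulA : associative emul.
Proof. move=> f g h; rewrite /emul; case: rv; apply: endo_ext => //=; by rewrite mulrA. Qed.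
Lemma emul1 : left_id eone emul.
Proof. move=> f; rewrite /emul; case: rv; apply: endo_ext => //=; by rewrite ?mul1r ?mulr1. Qed.
Lemma emulr1 : right_id eone emul.
Proof. move=> f; rewrite /emul; case: rv; apply: endo_ext => //=; by rewrite ?mul1r ?mulr1. Qed.
Lemma emulDl : left_distributive emul eadd.
Proof.
move=> f g h; rewrite /emul; case: rv; apply: endo_ext => //=; intros;
 rewrite ?scale1r ?mul1r ?mulrDl ?mulrDr //.
by rewrite (linD (proj1 (ep h))).
Qed.
Lemma emulDr : right_distributive emul eadd.
Proof.
move=> f g h; rewrite /emul; case: rv; apply: endo_ext => //=; intros;
 rewrite ?scale1r ?mul1r ?mulrDl ?mulrDr //.
by rewrite (linD (proj1 (ep f))).
Qed.
Lemma eone0 : eone != e0.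
Proof. apply/eqP => /(congr1 ec) /= /eqP; by rewrite oner_eq0. Qed.

HB.instance Definition _ := GRing.isNzRing.Build endo eaddA eaddC eadd0 eaddN
  emulA emul1 emulr1 emulDl emulDr eone0.

Lemma escaleA a b f : escale a (escale b f) = escale (a * b) f.
Proof. apply: endo_ext => /=; intros; by rewrite ?addr0 ?mulr0 ?addr0 ?scalerA ?mulrA. Qed.
Lemma escale1 : left_id 1 escale.
Proof. move=> f; apply: endo_ext => /=; intros; by rewrite ?addr0 ?mulr0 ?addr0 ?scale1r ?mul1r. Qed.
Lemma escaleDr : right_distributive escale +%R.
Proof. move=> a f g; apply: endo_ext => /=; intros; rewrite ?addr0 ?mulr0 ?addr0 ?scale1r ?mul1r;
 by rewrite ?scalerDr ?mulrDr. Qed.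
Lemma escaleDl f : {morph escale^~ f: a b / a + b}.
Proof. move=> a b; apply: endo_ext => /=; intros; rewrite ?addr0 ?mulr0 ?addr0 ?scale1r ?mul1r;
 by rewrite ?scalerDl ?mulrDl. Qed.

HB.instance Definition _ := GRing.Zmodule_isLmodule.Build K endo escaleA escale1 escaleDr escaleDl.

Lemma escaleAl a (f g : endo) : a *: (f * g) = (a *: f) * g.
Proof.
rewrite /GRing.scale /= /GRing.mul /= /emul; case: rv; apply: endo_ext => /=;
 intros; rewrite ?addr0 ?(linZ (proj1 (ep f))) ?(linZ (proj1 (ep g))) //;
 first [by rewrite mulrA | by rewrite mulrCA].
Qed.
Lemma escaleAr a (f g : endo) : a *: (f * g) = f * (a *: g).
Proof.
rewrite /GRing.scale /= /GRing.mul /= /emul; case: rv; apply: endo_ext => /=;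
 intros; rewrite ?addr0 ?(linZ (proj1 (ep f))) ?(linZ (proj1 (ep g))) //;
 first [by rewrite mulrA | by rewrite mulrCA].
Qed.
HB.instance Definition _ := GRing.Lmodule_isLalgebra.Build K endo escaleAl.
HB.instance Definition _ := GRing.Lalgebra_isAlgebra.Build K endo escaleAr.

Lemma ef_add (f g : endo) v : ef (f + g) v = ef f v + ef g v.
Proof. by rewrite /= scale1r. Qed.
Lemma ef_scale a (f : endo) v : ef (a *: f) v = a *: ef f v.
Proof. by rewrite /= addr0. Qed.
Lemma ef_one v : ef (1 : endo) v = v. Proof. by []. Qed.
Lemma ef_mul (f g : endo) v : ef (f * g) v = if rv then ef g (ef f v) else ef f (ef g v).
Proof. by rewrite /GRing.mul /= /emul; case: rv. Qed.
End Endo.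


Section Gen.
Variable K : fieldType.

Lemma ef_opp (V : lmodType K) (S : cpred V) rv (f : endoT S rv) v : ef (- f) v = - ef f v.
Proof. by rewrite /= addr0 scaleN1r. Qed.
Lemma ef_sub (V : lmodType K) (S : cpred V) rv (f g : endoT S rv) v :
  ef (f - g) v = ef f v - ef g v.
Proof. by rewrite ef_add ef_opp. Qed.
Lemma ef_zero (V : lmodType K) (S : cpred V) rv v : ef (0 : endoT S rv) v = 0.
Proof. by []. Qed.

Definition cpT (V : lmodType K) : cpred V.
Proof.
refine (@CPred K V (fun _ => True) _ _ _ _); by [].
Defined.

Definition cpP (V : lmodType K) (P : V -> Prop) (HP : subspace P) : cpred V.
Proof.
refine (@CPred K V (fun f => forall v, P v -> P (f v)) _ _ _ _).
- by [].
- by move=> f g Hf Hg v /Hg /Hf.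
- by move=> v _; case: HP.
- move=> a f g _ _ Hf Hg v Pv; case: HP => _; apply; [exact: Hf|exact: Hg].
Defined.

Lemma sub_lc (V : lmodType K) (P : V -> Prop) : subspace P ->
  (forall x y, P x -> P y -> P (x + y)) /\ (forall a x, P x -> P (a *: x)) /\
  (forall x, P x -> P (- x)) /\ (forall x y, P x -> P y -> P (x - y)).
Proof.
case=> P0 Pl.
have PD x y : P x -> P y -> P (x + y) by move=> *; rewrite -[x]scale1r; apply: Pl.
have PZ a x : P x -> P (a *: x) by move=> *; rewrite -[_ *: _]addr0; apply: Pl.
have PN x : P x -> P (- x) by move=> *; rewrite -scaleN1r; apply: PZ.
by split=> //; split=> //; split=> // x y Px Py; apply: PD => //; apply: PN.
Qed.

Section Tensor2.
Variables (V W P : lmodType K) (t : V -> W -> P) (Ht : is_tensor2 t).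
Lemma t2_ext (Z : lmodType K) (h1 h2 : P -> Z) : lin h1 -> lin h2 ->
  (forall v w, h1 (t v w) = h2 (t v w)) -> forall p, h1 p = h2 p.
Proof.
move=> H1 H2 E p; case: Ht => [[tl tr] U].
have Hb : bilin (fun v w => h1 (t v w)).
  by split=> [y|x] a u u'; rewrite ?tl ?tr H1.
have [h [hl [hE hU]]] := U Z _ Hb.
by rewrite (hU h1 H1 (fun _ _ => erefl)) (hU h2 H2 (fun v w => esym (E v w))).
Qed.
Lemma t2_lift (Z : lmodType K) (b : V -> W -> Z) : bilin b ->
  exists h : P -> Z, lin h /\ forall v w, h (t v w) = b v w.
Proof. by move=> Hb; case: Ht => _ U; have [h [hl [hE _]]] := U Z b Hb; exists h. Qed.
End Tensor2.

Section Tensor3.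
Variables (V1 V2 V3 P : lmodType K) (t : V1 -> V2 -> V3 -> P) (Ht : is_tensor3 t).
Lemma t3_ext (Z : lmodType K) (h1 h2 : P -> Z) : lin h1 -> lin h2 ->
  (forall u v w, h1 (t u v w) = h2 (t u v w)) -> forall p, h1 p = h2 p.
Proof.
move=> H1 H2 E p; case: Ht => [[ta [tb tc]] U].
have Hb : trilin (fun u v w => h1 (t u v w)).
  by split=> [y z|]; [|split=> [x z|x y]] => a u u'; rewrite ?ta ?tb ?tc H1.
have [h [hl [hE hU]]] := U Z _ Hb.
by rewrite (hU h1 H1 (fun _ _ _ => erefl)) (hU h2 H2 (fun u v w => esym (E u v w))).
Qed.
End Tensor3.

Lemma bilinl (A B C : lmodType K) (b : A -> B -> C) : bilin b -> forall y, lin (b^~ y).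
Proof. by case. Qed.
Lemma bilinr (A B C : lmodType K) (b : A -> B -> C) : bilin b -> forall x, lin (b x).
Proof. by case. Qed.

Section UEAind.
Variables (L : lmodType K) (brL : L -> L -> L) (U : algType K) (j : L -> U)
  (HU : is_UEA brL j).

Lemma uea_ind (P : U -> Prop) : subspace P -> P 1 ->
  (forall u v, P u -> P v -> P (u * v)) -> (forall a, P (j a)) -> forall u, P u.
Proof.
move=> HP P1 PM Pj u.
have Hj : lin j by case: HU => [[]].
pose SP := cpP HP.
have linR (w : U) : lin (fun v : U => v * w) by move=> a x y; rewrite mulrDl scalerAl.
have prR a : lin (fun v : U => v * j a) /\ SP (fun v : U => v * j a).
  by split => // v Pv; apply: PM.
pose phi a : endoT SP true := Endo 0 (prR a).
have Hphi : lie_map brL phi.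
  split.
    move=> c a b; apply: endo_ext => [v|] /=; last by rewrite !(mulr0, mul0r, addr0, add0r, mul1r).
    by rewrite !(scale1r, addr0) Hj mulrDr scalerAr.
  move=> a b; apply: endo_ext => [v|] /=; last by rewrite !(mulr0, mul0r, addr0, add0r, mul1r, oppr0).
  rewrite !(scale1r, addr0, scaleN1r); case: HU => [[_ ->]] _.
  by rewrite mulrBr !mulrA.
case: HU => _ /(_ _ _ Hphi) [Phi [[PhiL [Phi1 PhiM]] [PhiJ _]]].
pose ST := cpT U.
have prT (w : U) : lin (fun v : U => v * w) /\ ST (fun v : U => v * w) by [].
pose phiT a : endoT ST true := Endo 0 (prT (j a)).
have HphiT : lie_map brL phiT.
  split.
    move=> c a b; apply: endo_ext => [v|] /=; last by rewrite !(mulr0, mul0r, addr0, add0r, mul1r).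
    by rewrite !(scale1r, addr0) Hj mulrDr scalerAr.
  move=> a b; apply: endo_ext => [v|] /=; last by rewrite !(mulr0, mul0r, addr0, add0r, mul1r, oppr0).

  rewrite !(scale1r, addr0, scaleN1r); case: HU => [[_ ->]] _.
  by rewrite mulrBr !mulrA.
have [PhiT [_ [_ Uniq]]] := (proj2 HU) _ _ HphiT.
have prI (f : endoT SP true) : lin (ef f) /\ ST (ef f) by split => //; case: (ep f).
pose incl (f : endoT SP true) : endoT ST true := Endo (ec f) (prI f).
pose Psi (w : U) : endoT ST true := Endo (ec (Phi w)) (prT w).
have H1 : alg_hom (fun w => incl (Phi w)).
  split; [|split].
  - move=> c x y; apply: endo_ext => [v|] /=; by rewrite PhiL.
  - by apply: endo_ext => [v|] /=; rewrite Phi1.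
  - move=> x y; apply: endo_ext => [v|] /=; by rewrite PhiM.
have H2 : alg_hom Psi.
  split; [|split].
  - move=> c x y; apply: endo_ext => [v|] /=; first by rewrite !(scale1r, addr0) mulrDr scalerAr.
    by rewrite PhiL /= !(mul1r, addr0).
  - by apply: endo_ext => [v|] /=; rewrite ?mulr1 ?Phi1.
  - move=> x y; apply: endo_ext => [v|] /=; first by rewrite mulrA.
    by rewrite PhiM /= mulrC.
have E1 : forall w, incl (Phi w) = PhiT w.
  by apply: Uniq H1 _ => a; apply: endo_ext => [v|] /=; rewrite PhiJ.
have E2 : forall w, Psi w = PhiT w.
  by apply: Uniq H2 _ => a; apply: endo_ext => [v|] /=; rewrite ?PhiJ.
have : ef (Phi u) 1 = 1 * u.
  by have := congr1 (fun f => ef f 1) (E1 u); rewrite -E2 /=.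
rewrite mul1r => <-; exact: (proj2 (ep (Phi u))).
Qed.
End UEAind.

Section TAind.
Variables (L : lmodType K) (U : algType K) (j : L -> U)
  (HU : is_tensor_alg j).

Lemma talg_ind (P : U -> Prop) : subspace P -> P 1 ->
  (forall u v, P u -> P v -> P (u * v)) -> (forall a, P (j a)) -> forall u, P u.
Proof.
move=> HP P1 PM Pj u.
have Hj : lin j by case: HU.
pose SP := cpP HP.
have linR (w : U) : lin (fun v : U => v * w) by move=> a x y; rewrite mulrDl scalerAl.
have prR a : lin (fun v : U => v * j a) /\ SP (fun v : U => v * j a).
  by split => // v Pv; apply: PM.
pose phi a : endoT SP true := Endo 0 (prR a).
have Hphi : lin phi.
    move=> c a b; apply: endo_ext => [v|] /=; last by rewrite !(mulr0, mul0r, addr0, add0r, mul1r).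
    by rewrite !(scale1r, addr0) Hj mulrDr scalerAr.
case: HU => _ /(_ _ _ Hphi) [Phi [[PhiL [Phi1 PhiM]] [PhiJ _]]].
pose ST := cpT U.
have prT (w : U) : lin (fun v : U => v * w) /\ ST (fun v : U => v * w) by [].
pose phiT a : endoT ST true := Endo 0 (prT (j a)).
have HphiT : lin phiT.
    move=> c a b; apply: endo_ext => [v|] /=; last by rewrite !(mulr0, mul0r, addr0, add0r, mul1r).
    by rewrite !(scale1r, addr0) Hj mulrDr scalerAr.
have [PhiT [_ [_ Uniq]]] := (proj2 HU) _ _ HphiT.
have prI (f : endoT SP true) : lin (ef f) /\ ST (ef f) by split => //; case: (ep f).
pose incl (f : endoT SP true) : endoT ST true := Endo (ec f) (prI f).
pose Psi (w : U) : endoT ST true := Endo (ec (Phi w)) (prT w).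
have H1 : alg_hom (fun w => incl (Phi w)).
  split; [|split].
  - move=> c x y; apply: endo_ext => [v|] /=; by rewrite PhiL.
  - by apply: endo_ext => [v|] /=; rewrite Phi1.
  - move=> x y; apply: endo_ext => [v|] /=; by rewrite PhiM.
have H2 : alg_hom Psi.
  split; [|split].
  - move=> c x y; apply: endo_ext => [v|] /=; first by rewrite !(scale1r, addr0) mulrDr scalerAr.
    by rewrite PhiL /= !(mul1r, addr0).
  - by apply: endo_ext => [v|] /=; rewrite ?mulr1 ?Phi1.
  - move=> x y; apply: endo_ext => [v|] /=; first by rewrite mulrA.
    by rewrite PhiM /= mulrC.
have E1 : forall w, incl (Phi w) = PhiT w.
  by apply: Uniq H1 _ => a; apply: endo_ext => [v|] /=; rewrite PhiJ.
have E2 : forall w, Psi w = PhiT w.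
  by apply: Uniq H2 _ => a; apply: endo_ext => [v|] /=; rewrite ?PhiJ.
have : ef (Phi u) 1 = 1 * u.
  by have := congr1 (fun f => ef f 1) (E1 u); rewrite -E2 /=.
rewrite mul1r => <-; exact: (proj2 (ep (Phi u))).
Qed.
End TAind.

Section LieFactor.
Variables (g : lmodType K) (br : g -> g -> g)
  (L : lmodType K) (brL : L -> L -> L) (pi : g -> L) (HL : is_Lie_quotient br brL pi)
  (U : algType K) (j : L -> U) (HU : is_UEA brL j).

Lemma lie_factor (A : algType K) (rho : g -> A) : lin rho ->
  (forall y z, rho (br y z) = rho y * rho z - rho z * rho y) ->
  exists Phi : U -> A, alg_hom Phi /\ forall y, Phi (j (pi y)) = rho y.
Proof.
move=> Hr Hb.
case: HL => Hpi [Hsurj [Hpib Hker]].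
have k0 x : pi x = 0 -> rho x = 0.
  move/Hker/(_ (fun x => rho x = 0)); apply.
  - by split; [exact: lin0|move=> a x' y' Hx Hy; rewrite Hr Hx Hy scaler0 addr0].
  - by move=> a b Ha; rewrite !Hb Ha mul0r mulr0 subrr.
  - by move=> s [z ->]; rewrite Hb subrr.
have keq x y : pi x = pi y -> rho x = rho y.
  move=> E; apply/eqP; rewrite -subr_eq0; apply/eqP.
  by rewrite -(linB Hr) k0 // (linB Hpi) E subrr.
have [s Hs] : exists s : L -> g, forall a, pi (s a) = a.
  by have [s Hs] := choice (P := fun a x => pi x = a) Hsurj; exists s.
have Hl : lie_map brL (fun a => rho (s a)).
  split.
    move=> c a b; rewrite -Hr; apply: keq; by rewrite Hpi !Hs.
  move=> a b; rewrite -Hb; apply: keq; by rewrite Hpib !Hs.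
case: HU => _ /(_ _ _ Hl) [Phi [HPhi [HPhij _]]].
exists Phi; split => // y; rewrite HPhij; apply: keq; by rewrite Hs.
Qed.
End LieFactor.
End Gen.

Lemma ab_id (V : zmodType) (A A' B C D D' : V) :
  (A + B) + (C + D) - ((A' + C) + (B + D')) = (A - A') + (D - D').
Proof.
rewrite !opprD !addrA [LHS](ACl (1*5*4*8*3*6*2*7)).
by rewrite /= !addrK.
Qed.

Lemma ef_lc (K : fieldType) (V : lmodType K) (S : cpred V) rv (a : K) (f h : endoT S rv) v :
  ef (a *: f + h) v = a *: ef f v + ef h v.
Proof. by rewrite ef_add ef_scale. Qed.

Section Main.
Variables (K : fieldType)
  (g : lmodType K) (br : g -> g -> g) (Hg : leibniz_algebra br)
  (L : lmodType K) (brL : L -> L -> L) (pi : g -> L) (HL : is_Lie_quotient br brL pi)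
  (U : algType K) (j : L -> U) (HU : is_UEA brL j)
  (T : algType K) (tau : g -> T) (HT : is_tensor_alg tau)
  (bar : T -> U) (Hbar : alg_hom bar) (Hbartau : forall x, bar (tau x) = j (pi x))
  (F : lmodType K) (t3 : T -> g -> T -> F) (HF : is_tensor3 t3)
  (fdl fdr : F -> F -> F) (Hfree : free_dialg_products tau t3 fdl fdr)
  (Q : lmodType K) (qdl qdr : Q -> Q -> Q) (q : F -> Q)
  (HQ : is_Ud_quotient br t3 fdl fdr qdl qdr q)
  (M : lmodType K) (t : U -> g -> M) (HM : is_tensor2 t).

Let jp y := j (pi y).

Let Hj : lin j. Proof. by case: HU => [[]]. Qed.
Let HjB a b : j (brL a b) = j a * j b - j b * j a. Proof. by case: HU => [[_ ->]]. Qed.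
Let Hpi : lin pi. Proof. by case: HL. Qed.
Let HpiB x y : pi (br x y) = brL (pi x) (pi y). Proof. by case: HL => _ [_ []]. Qed.
Let Hpis : forall a, exists x, pi x = a. Proof. by case: HL => _ []. Qed.
Let Hjp : lin jp. Proof. by move=> a x y; rewrite /jp Hpi Hj. Qed.
Let HjpB x y : jp (br x y) = jp x * jp y - jp y * jp x. Proof. by rewrite /jp HpiB HjB. Qed.
Let Hbr : bilin br. Proof. by case: Hg. Qed.
Let Hleib x y z : br x (br y z) = br (br x y) z - br (br x z) y. Proof. by case: Hg. Qed.
Let Ht : bilin t. Proof. by case: HM. Qed.
Let HbarL : lin bar. Proof. by case: Hbar. Qed.
Let Hbar1 : bar 1 = 1. Proof. by case: Hbar => _ []. Qed.
Let HbarM x y : bar (x * y) = bar x * bar y. Proof. by case: Hbar => _ []. Qed.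

Let tD1 w w' x : t (w + w') x = t w x + t w' x. Proof. exact: (linD (bilinl Ht x)). Qed.
Let tZ1 a w x : t (a *: w) x = a *: t w x. Proof. exact: (linZ (bilinl Ht x)). Qed.
Let tD2 w x x' : t w (x + x') = t w x + t w x'. Proof. exact: (linD (bilinr Ht w)). Qed.
Let tZ2 a w x : t w (a *: x) = a *: t w x. Proof. exact: (linZ (bilinr Ht w)). Qed.
Let tB1 w w' x : t (w - w') x = t w x - t w' x. Proof. exact: (linB (bilinl Ht x)). Qed.
Let tB2 w x x' : t w (x - x') = t w x - t w x'. Proof. exact: (linB (bilinr Ht w)). Qed.

Lemma ex_l : exists l : U -> M -> M, forall u, lin (l u) /\ forall w x, l u (t w x) = t (u * w) x.
Proof.
suff H : forall u, exists h : M -> M, lin h /\ forall w x, h (t w x) = t (u * w) x.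
  by have [l Hl] := choice H; exists l.
move=> u.
apply: t2_lift => //; split=> [y|x] a w w'; rewrite ?mulrDr -?scalerAr ?tD1 ?tZ1 //.
by rewrite tD2 tZ2.
Qed.

Lemma ex_f : exists f : M -> U, lin f /\ forall w x, f (t w x) = w * jp x.
Proof.
apply: t2_lift => //; split=> [y|x] a w w'; first by rewrite mulrDl -scalerAl.
by rewrite Hjp mulrDr -scalerAr.
Qed.

Lemma ex_rho : exists rho : g -> M -> M, forall y, lin (rho y) /\
  forall w x, rho y (t w x) = t w (br x y) + t (w * jp y) x.
Proof.
suff H : forall y, exists h : M -> M, lin h /\ forall w x, h (t w x) = t w (br x y) + t (w * jp y) x.
  by have [l Hl] := choice H; exists l.
move=> y.
apply: t2_lift => //; split=> [x|w] a w1 w2.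
  by rewrite mulrDl -scalerAl tD1 tZ1 tD1 tZ1 scalerDr addrACA.
by rewrite (bilinl Hbr y) tD2 tZ2 tD2 tZ2 scalerDr addrACA.
Qed.

Let l := proj1_sig (cid ex_l).
Let Hl u : lin (l u). Proof. exact: (proj1 (proj2_sig (cid ex_l) u)). Qed.
Let lt u w x : l u (t w x) = t (u * w) x. Proof. exact: (proj2 (proj2_sig (cid ex_l) u)). Qed.
Let f := proj1_sig (cid ex_f).
Let Hf : lin f. Proof. exact: (proj1 (proj2_sig (cid ex_f))). Qed.
Let ft w x : f (t w x) = w * jp x. Proof. exact: (proj2 (proj2_sig (cid ex_f))). Qed.
Let rho := proj1_sig (cid ex_rho).
Let Hrho y : lin (rho y). Proof. exact: (proj1 (proj2_sig (cid ex_rho) y)). Qed.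
Let rhot y w x : rho y (t w x) = t w (br x y) + t (w * jp y) x.
Proof. exact: (proj2 (proj2_sig (cid ex_rho) y)). Qed.

Let ext2 := t2_ext HM.

Let lin_lcf (V W : lmodType K) (a : K) (h1 h2 : V -> W) : lin h1 -> lin h2 ->
  lin (fun v => a *: h1 v + h2 v).
Proof.
move=> H1 H2 b x y; rewrite H1 H2 !scalerDr !scalerA [a * b]mulrC.
rewrite -!addrA; congr (_ + _); by rewrite addrCA.
Qed.
Let lin_sub (V W : lmodType K) (h1 h2 : V -> W) : lin h1 -> lin h2 ->
  lin (fun v => h1 v - h2 v).
Proof.
move=> H1 H2 b x y; rewrite H1 H2 scalerBr opprD addrACA; done.
Qed.
Let lin_compf (V W Z : lmodType K) (h1 : W -> Z) (h2 : V -> W) : lin h1 -> lin h2 ->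
  lin (fun v => h1 (h2 v)).
Proof. by move=> H1 H2 b x y; rewrite H2 H1. Qed.

Lemma rho_lin y1 y2 (a : K) m : rho (a *: y1 + y2) m = a *: rho y1 m + rho y2 m.
Proof.
apply: (ext2 (Hrho _) (lin_lcf a (Hrho y1) (Hrho y2))) => w x.
rewrite !rhot (bilinr Hbr x) Hjp mulrDr -scalerAr tD2 tZ2 tD1 tZ1.
by rewrite scalerDr addrACA.
Qed.

Lemma rho_br y z m : rho (br y z) m = rho z (rho y m) - rho y (rho z m).
Proof.
apply: (ext2 (Hrho _) (lin_sub (lin_compf (Hrho z) (Hrho y)) (lin_compf (Hrho y) (Hrho z)))) => w x.
rewrite !rhot !(linD (Hrho _)) !rhot Hleib HjpB tB2 mulrBr tB1 !mulrA.
by rewrite ab_id.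
Qed.

Definition rhoE y : endoT (cpT M) true := @Endo _ _ (cpT M) _ 0 (conj (Hrho y) I).

Lemma rhoE_lin : lin rhoE.
Proof.
move=> a y1 y2; apply: endo_ext => [m|] /=; last by rewrite !(mulr0, addr0).
by rewrite rho_lin !(scale1r, addr0).
Qed.

Lemma rhoE_br y z : rhoE (br y z) = rhoE y * rhoE z - rhoE z * rhoE y.
Proof.
apply: endo_ext => [m|]; last by rewrite /= !(mulr0, addr0, mul0r, oppr0).
by rewrite ef_sub !ef_mul /= rho_br.
Qed.

Let Lr := proj1_sig (cid (lie_factor HL HU rhoE_lin rhoE_br)).
Let HLr : alg_hom Lr. Proof. exact: (proj1 (proj2_sig (cid (lie_factor HL HU rhoE_lin rhoE_br)))). Qed.
Let Lrj y : Lr (jp y) = rhoE y. Proof. exact: (proj2 (proj2_sig (cid (lie_factor HL HU rhoE_lin rhoE_br)))). Qed.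

Definition r m u := ef (Lr u) m.

Lemma sub_eq (V Z : lmodType K) (I : Type) (h1 h2 : I -> V -> Z) :
  (forall i, lin (h1 i)) -> (forall i, lin (h2 i)) ->
  subspace (fun v => forall i, h1 i v = h2 i v).
Proof.
move=> H1 H2; split=> [i|a x y Hx Hy i]; first by rewrite !lin0.
by rewrite H1 H2 Hx Hy.
Qed.

Let LrL : lin Lr. Proof. by case: HLr. Qed.
Let Lr1 : Lr 1 = 1. Proof. by case: HLr => _ []. Qed.
Let LrM x y : Lr (x * y) = Lr x * Lr y. Proof. by case: HLr => _ []. Qed.

Lemma r_linm u : lin (fun m => r m u). Proof. exact: (proj1 (ep (Lr u))). Qed.
Lemma r_linu m : lin (r m).
Proof. by move=> a u v; rewrite /r LrL ef_lc. Qed.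
Lemma r1 m : r m 1 = m. Proof. by rewrite /r Lr1. Qed.
Lemma rM m u v : r m (u * v) = r (r m u) v. Proof. by rewrite /r LrM ef_mul. Qed.
Lemma rj m y : r m (jp y) = rho y m. Proof. by rewrite /r Lrj. Qed.

Lemma l_linu m : lin (l ^~ m).
Proof.
move=> a u v; apply: (ext2 (Hl _) (lin_lcf a (Hl u) (Hl v))) => w x.
by rewrite !lt mulrDl -scalerAl tD1 tZ1.
Qed.
Lemma l1 m : l 1 m = m.
Proof. by apply: (ext2 (Hl _) (fun _ _ _ => erefl)) => w x; rewrite lt mul1r. Qed.
Lemma lM u v m : l (u * v) m = l u (l v m).
Proof.
by apply: (ext2 (Hl _) (lin_compf (Hl u) (Hl v))) => w x; rewrite !lt mulrA.
Qed.

Lemma ind_pi (P : U -> Prop) : subspace P -> P 1 ->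
  (forall u v, P u -> P v -> P (u * v)) -> (forall y, P (jp y)) -> forall u, P u.
Proof.
move=> HP P1 PM Pj; apply: (uea_ind HU HP P1 PM) => a.
by have [y <-] := Hpis a; apply: Pj.
Qed.

Lemma lr_comm u m v : l u (r m v) = r (l u m) v.
Proof.
suff H : forall v (p : U * M), l p.1 (r p.2 v) = r (l p.1 p.2) v by exact: (H v (u, m)).
apply: (ind_pi (P := fun v => forall p : U * M, l p.1 (r p.2 v) = r (l p.1 p.2) v)).
- apply: sub_eq => [[u1 m1]|[u1 m1]] /=; first exact: (lin_compf (Hl u1) (r_linu m1)).
  exact: r_linu.
- by move=> [u1 m1]; rewrite /= !r1.
- move=> a b Ha Hb [u1 m1] /=; rewrite !rM.
  by have /= -> := Hb (u1, r m1 a); have /= -> := Ha (u1, m1).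
- move=> y [u1 m1] /=; rewrite !rj.
  apply: (ext2 (lin_compf (Hl u1) (Hrho y)) (lin_compf (Hrho y) (Hl u1))) => w x.
  by rewrite !rhot (linD (Hl u1)) !lt mulrA.
Qed.

Lemma fl u m : f (l u m) = u * f m.
Proof.
have H2 : lin (fun m => u * f m) by move=> a x y; rewrite Hf mulrDr scalerAr.
apply: (ext2 (lin_compf Hf (Hl u)) H2) => w x.
by rewrite lt !ft mulrA.
Qed.

Lemma fr m u : f (r m u) = f m * u.
Proof.
move: u m; apply: (ind_pi (P := fun u => forall m, f (r m u) = f m * u)).
- apply: sub_eq => m; first exact: (lin_compf Hf (r_linu m)).
  by move=> a x y; rewrite mulrDr scalerAr.
- by move=> m; rewrite r1 mulr1.
- by move=> a b Ha Hb m; rewrite rM Hb Ha mulrA.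
- move=> y m; rewrite rj.
  have H2 : lin (fun m => f m * jp y) by move=> a x z; rewrite Hf mulrDl scalerAl.
  apply: (ext2 (lin_compf Hf (Hrho y)) H2) => w x.
  rewrite rhot (linD Hf) !ft HjpB mulrBr -!mulrA subrK; done.
Qed.

Let HQd : dialgebra qdl qdr. Proof. by case: HQ. Qed.
Let Hqdl : bilin qdl. Proof. by case: HQd. Qed.
Let Hqdr : bilin qdr. Proof. by case: HQd => _ []. Qed.
Let Qax x y z := (proj2 (proj2 HQd)) x y z.
Let ax1 x y z : qdl (qdl x y) z = qdl x (qdr y z). Proof. by case: (Qax x y z). Qed.
Let ax2 x y z : qdl x (qdr y z) = qdl x (qdl y z). Proof. by case: (Qax x y z). Qed.
Let ax3 x y z : qdl (qdr x y) z = qdr x (qdl y z). Proof. by case: (Qax x y z). Qed.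
Let ax4 x y z : qdr (qdl x y) z = qdr x (qdr y z). Proof. by case: (Qax x y z). Qed.
Let ax5 x y z : qdr x (qdr y z) = qdr (qdr x y) z. Proof. by case: (Qax x y z). Qed.
Let Hq : lin q. Proof. by case: HQ => _ [[]]. Qed.
Let qdlh x y : q (fdl x y) = qdl (q x) (q y). Proof. by case: HQ => _ [[_ []]]. Qed.
Let qdrh x y : q (fdr x y) = qdr (q x) (q y). Proof. by case: HQ => _ [[_ []]]. Qed.
Let qsurj : forall y, exists x, q x = y. Proof. by case: HQ => _ [_ []]. Qed.
Let qker d : q d = 0 <-> dideal_gen fdl fdr
       (fun s => exists x y : g, s = t3 1 (br x y) 1 - fdl (t3 1 x 1) (t3 1 y 1)
                                     + fdr (t3 1 y 1) (t3 1 x 1)) d.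
Proof. by case: HQ => _ [_ []]. Qed.
Let Hfdl : bilin fdl. Proof. by case: Hfree. Qed.
Let Hfdr : bilin fdr. Proof. by case: Hfree => _ []. Qed.
Let fdlt u v w u' v' w' : fdl (t3 u v w) (t3 u' v' w') = t3 u v (w * u' * tau v' * w').
Proof. by case: Hfree => _ [_ []]. Qed.
Let fdrt u v w u' v' w' : fdr (t3 u v w) (t3 u' v' w') = t3 (u * tau v * w * u') v' w'.
Proof. by case: Hfree => _ [_ []]. Qed.
Let Ht3 : trilin t3. Proof. by case: HF. Qed.
Let t3l1 v w : lin (fun u => t3 u v w). Proof. by case: Ht3. Qed.
Let t3l2 u w : lin (fun v => t3 u v w). Proof. by case: Ht3 => _ []. Qed.
Let t3l3 u v : lin (t3 u v). Proof. by case: Ht3 => _ []. Qed.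

Definition dot y := q (t3 1 y 1).
Lemma dot_lin : lin dot.
Proof. by move=> a x y; rewrite /dot (t3l2 1 1) Hq. Qed.

Lemma dot_rel x y : dot (br x y) = qdl (dot x) (dot y) - qdr (dot y) (dot x).
Proof.
have h : q (t3 1 (br x y) 1 - fdl (t3 1 x 1) (t3 1 y 1) + fdr (t3 1 y 1) (t3 1 x 1)) = 0.
  by apply/qker => I _ _ HS; apply: HS; exists x, y.
move: h; rewrite (linD Hq) (linB Hq) qdlh qdrh -/(dot _) -/(dot x) -/(dot y) => h.
apply/eqP; rewrite -subr_eq0 -h; apply/eqP.
by rewrite opprB addrA addrAC.
Qed.

Definition lamE y : endoT (cpT Q) false :=
  @Endo _ _ (cpT Q) _ 0 (conj (bilinr Hqdr (dot y)) I).
Lemma lamE_lin : lin lamE.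
Proof.
move=> a y1 y2; apply: endo_ext => [m|] /=; last by rewrite !(mulr0, addr0).
by rewrite dot_lin (bilinl Hqdr) !(scale1r, addr0).
Qed.
Lemma lamE_br y z : lamE (br y z) = lamE y * lamE z - lamE z * lamE y.
Proof.
apply: endo_ext => [m|]; last by rewrite /= !(mulr0, addr0, mul0r, oppr0).
rewrite ef_sub !ef_mul /= dot_rel (linB (bilinl Hqdr m)).
by rewrite ax4 -ax5.
Qed.

Definition rqE y : endoT (cpT Q) true :=
  @Endo _ _ (cpT Q) _ 0 (conj (bilinl Hqdl (dot y)) I).
Lemma rqE_lin : lin rqE.
Proof.
move=> a y1 y2; apply: endo_ext => [m|] /=; last by rewrite !(mulr0, addr0).
by rewrite dot_lin (bilinr Hqdl) !(scale1r, addr0).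
Qed.
Lemma rqE_br y z : rqE (br y z) = rqE y * rqE z - rqE z * rqE y.
Proof.
apply: endo_ext => [m|]; last by rewrite /= !(mulr0, addr0, mul0r, oppr0).
rewrite ef_sub !ef_mul /= dot_rel (linB (bilinr Hqdl m)).
by rewrite [in RHS]ax1 [in RHS]ax1 [in RHS]ax2.
Qed.

Let Lam := proj1_sig (cid (lie_factor HL HU lamE_lin lamE_br)).
Let HLam : alg_hom Lam. Proof. exact: (proj1 (proj2_sig (cid (lie_factor HL HU lamE_lin lamE_br)))). Qed.
Let Lamj y : Lam (jp y) = lamE y. Proof. exact: (proj2 (proj2_sig (cid (lie_factor HL HU lamE_lin lamE_br)))). Qed.
Let Rq := proj1_sig (cid (lie_factor HL HU rqE_lin rqE_br)).
Let HRq : alg_hom Rq. Proof. exact: (proj1 (proj2_sig (cid (lie_factor HL HU rqE_lin rqE_br)))). Qed.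
Let Rqj y : Rq (jp y) = rqE y. Proof. exact: (proj2 (proj2_sig (cid (lie_factor HL HU rqE_lin rqE_br)))). Qed.
Let LamL : lin Lam. Proof. by case: HLam. Qed.
Let Lam1 : Lam 1 = 1. Proof. by case: HLam => _ []. Qed.
Let LamM x y : Lam (x * y) = Lam x * Lam y. Proof. by case: HLam => _ []. Qed.
Let RqL : lin Rq. Proof. by case: HRq. Qed.
Let Rq1 : Rq 1 = 1. Proof. by case: HRq => _ []. Qed.
Let RqM x y : Rq (x * y) = Rq x * Rq y. Proof. by case: HRq => _ []. Qed.

Lemma ex_psi : exists psi : F -> M, lin psi /\
  forall u v w, psi (t3 u v w) = l (bar u) (r (t 1 v) (bar w)).
Proof.
case: HF => _ /(_ M (fun u v w => l (bar u) (r (t 1 v) (bar w)))) [].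
  split; [|split].
  - by move=> v w a u u'; rewrite HbarL l_linu.
  - by move=> u w a v v'; rewrite (bilinr Ht 1) r_linm (Hl _).
  - by move=> u v a w w'; rewrite HbarL r_linu (Hl _).
by move=> h [hl [hE _]]; exists h.
Qed.
Let psi := proj1_sig (cid ex_psi).
Let Hpsi : lin psi. Proof. exact: (proj1 (proj2_sig (cid ex_psi))). Qed.
Let psit u v w : psi (t3 u v w) = l (bar u) (r (t 1 v) (bar w)).
Proof. exact: (proj2 (proj2_sig (cid ex_psi))). Qed.
Let ext3 := t3_ext HF.

Lemma psi_dot y : psi (t3 1 y 1) = t 1 y.
Proof. by rewrite psit Hbar1 r1 l1. Qed.

Lemma psi_fdl X Y : psi (fdl X Y) = r (psi X) (f (psi Y)).
Proof.
have H2 Y' : lin (fun X' => r (psi X') (f (psi Y'))).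
  exact: (lin_compf (h1 := fun m => r m (f (psi Y'))) (r_linm _) Hpsi).
have HA u v w Y' : psi (fdl (t3 u v w) Y') = r (psi (t3 u v w)) (f (psi Y')).
  have H2' : lin (fun Y'' => r (psi (t3 u v w)) (f (psi Y''))).
    exact: (lin_compf (h1 := r (psi (t3 u v w))) (r_linu _) (lin_compf Hf Hpsi)).
  apply: (ext3 (lin_compf Hpsi (bilinr Hfdl _)) H2') => u' v' w'.
  rewrite fdlt !psit fl fr ft -lr_comm -rM !HbarM Hbartau.
  by rewrite mul1r !mulrA.
by apply: (ext3 (lin_compf Hpsi (bilinl Hfdl Y)) (H2 Y)) => u v w; apply: HA.
Qed.

Lemma psi_fdr X Y : psi (fdr X Y) = l (f (psi X)) (psi Y).
Proof.
have H2 Y' : lin (fun X' => l (f (psi X')) (psi Y')).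
  exact: (lin_compf (h1 := fun u => l u (psi Y')) (l_linu _) (lin_compf Hf Hpsi)).
have HA u v w Y' : psi (fdr (t3 u v w) Y') = l (f (psi (t3 u v w))) (psi Y').
  apply: (ext3 (lin_compf Hpsi (bilinr Hfdr _)) (lin_compf (Hl _) Hpsi)) => u' v' w'.
  rewrite fdrt !psit fl fr ft -lM !HbarM Hbartau.
  by rewrite mul1r !mulrA.
by apply: (ext3 (lin_compf Hpsi (bilinl Hfdr Y)) (H2 Y)) => u v w; apply: HA.
Qed.

Lemma psi_ker d : q d = 0 -> psi d = 0.
Proof.
move/qker/(_ (fun d => psi d = 0)); apply.
- by split; [exact: lin0|move=> a x y Hx Hy; rewrite Hpsi Hx Hy scaler0 addr0].
- move=> a b Ha; rewrite psi_fdl psi_fdl psi_fdr psi_fdr Ha.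
  rewrite lin0 // !(lin0 (r_linm _)) !(lin0 (r_linu _)) !(lin0 (l_linu _)) !(lin0 (Hl _)) //.
- move=> s [x [y ->]]; rewrite (linD Hpsi) (linB Hpsi) psi_fdl psi_fdr !psi_dot !ft.
  by rewrite !mul1r rj rhot lt mulr1 mul1r opprD addrA subrr add0r addNr.
Qed.

Let sq := projT1 (choice qsurj).
Let Hsq e : q (sq e) = e. Proof. exact: (projT2 (choice qsurj) e). Qed.
Definition phi e := psi (sq e).

Lemma psi_eq X Y : q X = q Y -> psi X = psi Y.
Proof.
move=> E; apply/eqP; rewrite -subr_eq0 -(linB Hpsi); apply/eqP; apply: psi_ker.
by rewrite (linB Hq) E subrr.
Qed.
Lemma phi_q X : phi (q X) = psi X. Proof. by apply: psi_eq; rewrite Hsq. Qed.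
Lemma phi_lin : lin phi.
Proof.
move=> a x y; rewrite /phi -(Hpsi a) ; apply: psi_eq; by rewrite Hq !Hsq.
Qed.
Lemma phi_qdl d e : phi (qdl d e) = r (phi d) (f (phi e)).
Proof. by rewrite -{1}(Hsq d) -{1}(Hsq e) -qdlh phi_q psi_fdl. Qed.
Lemma phi_qdr d e : phi (qdr d e) = l (f (phi d)) (phi e).
Proof. by rewrite -{1}(Hsq d) -{1}(Hsq e) -qdrh phi_q psi_fdr. Qed.
Lemma phi_dot y : phi (dot y) = t 1 y.
Proof. by rewrite /dot phi_q psi_dot. Qed.
Lemma phi_t3 w x : phi (q (t3 w x 1)) = t (bar w) x.
Proof. by rewrite phi_q psit Hbar1 r1 lt mulr1. Qed.

Lemma ef_lin_l (A V : lmodType K) (S : cpred V) rv (Phi : A -> endoT S rv) v :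
  lin Phi -> lin (fun u => ef (Phi u) v).
Proof. by move=> HP a x y; rewrite HP ef_lc. Qed.

Lemma ex_chi : exists chi : M -> Q, lin chi /\ forall w x, chi (t w x) = ef (Lam w) (dot x).
Proof.
apply: t2_lift => //; split=> [x|w].
  exact: (ef_lin_l _ LamL).
by move=> a x y; rewrite dot_lin (proj1 (ep (Lam w))).
Qed.
Let chi := proj1_sig (cid ex_chi).
Let Hchi : lin chi. Proof. exact: (proj1 (proj2_sig (cid ex_chi))). Qed.
Let chit w x : chi (t w x) = ef (Lam w) (dot x). Proof. exact: (proj2 (proj2_sig (cid ex_chi))). Qed.

Lemma phi_Lam w d : phi (ef (Lam w) d) = l w (phi d).
Proof.
suff H : forall w0 d0, phi (ef (Lam w0) d0) = l w0 (phi d0) by apply: H.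
apply: (ind_pi (P := fun w => forall d, phi (ef (Lam w) d) = l w (phi d))).
- apply: sub_eq => d1; first exact: (lin_compf phi_lin (ef_lin_l _ LamL)).
  exact: l_linu.
- by move=> d1; rewrite Lam1 ef_one l1.
- by move=> a b Ha Hb d1; rewrite LamM ef_mul /= Ha Hb lM.
- by move=> y d1; rewrite Lamj /= phi_qdr phi_dot ft mul1r.
Qed.

Lemma phi_chi m : phi (chi m) = m.
Proof.
apply: (ext2 (lin_compf phi_lin Hchi) (fun _ _ _ => erefl)) => w x.
by rewrite chit phi_Lam phi_dot lt mulr1.
Qed.

Lemma chi_l w m : chi (l w m) = ef (Lam w) (chi m).
Proof.
apply: (ext2 (lin_compf Hchi (Hl w)) (lin_compf (proj1 (ep (Lam w))) Hchi)) => w' x.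
by rewrite lt !chit LamM ef_mul.
Qed.

Lemma Lam_qdl w d e : ef (Lam w) (qdl d e) = qdl (ef (Lam w) d) e.
Proof.
suff H : forall w0 (p : Q * Q), ef (Lam w0) (qdl p.1 p.2) = qdl (ef (Lam w0) p.1) p.2.
  exact: (H w (d, e)).
apply: (ind_pi (P := fun w => forall p : Q * Q, ef (Lam w) (qdl p.1 p.2) = qdl (ef (Lam w) p.1) p.2)).
- apply: sub_eq => p; first exact: (ef_lin_l _ LamL).
  exact: (lin_compf (h1 := fun z => qdl z p.2) (bilinl Hqdl _) (ef_lin_l _ LamL)).
- by move=> p; rewrite Lam1 !ef_one.
- move=> a b Ha Hb [d1 e1] /=; rewrite LamM !ef_mul /=.
  by have /= -> := Hb (d1, e1); have /= -> := Ha (ef (Lam b) d1, e1).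
- by move=> y [d1 e1] /=; rewrite Lamj /= ax3.
Qed.

Lemma chi_r m w : chi (r m w) = ef (Rq w) (chi m).
Proof.
suff H : forall w0 m1, chi (r m1 w0) = ef (Rq w0) (chi m1) by apply: H.
apply: (ind_pi (P := fun w => forall m, chi (r m w) = ef (Rq w) (chi m))).
- apply: sub_eq => m0; first exact: (lin_compf Hchi (r_linu m0)).
  exact: (ef_lin_l _ RqL).
- by move=> m0; rewrite r1 Rq1 ef_one.
- by move=> a b Ha Hb m0; rewrite rM Hb Ha RqM ef_mul.
- move=> y m0; rewrite rj Rqj; change (chi (rho y m0) = qdl (chi m0) (dot y)).
  have H2 : lin (fun z => qdl (chi z) (dot y)).
    exact: (lin_compf (h1 := fun z => qdl z (dot y)) (bilinl Hqdl _) Hchi).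
  apply: (ext2 (lin_compf Hchi (Hrho y)) H2) => w1 x.
  rewrite rhot (linD Hchi) !chit LamM ef_mul /= Lamj /=.
  rewrite -(linD (proj1 (ep (Lam w1)))) dot_rel subrK.
  by rewrite Lam_qdl.
Qed.

Lemma q_left u : forall (p : T * g * T), q (t3 (u * p.1.1) p.1.2 p.2) = ef (Lam (bar u)) (q (t3 p.1.1 p.1.2 p.2)).
Proof.
move: u; apply: (talg_ind HT).
- apply: sub_eq => p.
    move=> a x y; rewrite mulrDl -scalerAl (t3l1 p.1.2 p.2) Hq //.
  exact: (ef_lin_l _ (lin_compf (h1 := Lam) LamL HbarL)).
- by move=> p; rewrite mul1r Hbar1 Lam1 ef_one.
- move=> a b Ha Hb [[u' v] w] /=; rewrite -mulrA.
  have /= -> := Ha (b * u', v, w); have /= -> := Hb (u', v, w).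
  by rewrite HbarM LamM ef_mul.
- move=> y [[u' v] w] /=.
  have -> : t3 (tau y * u') v w = fdr (t3 1 y 1) (t3 u' v w) by rewrite fdrt mul1r mulr1.
  by rewrite qdrh Hbartau -/(jp y) Lamj.
Qed.

Lemma q_right w : forall (p : T * g * T), q (t3 p.1.1 p.1.2 (p.2 * w)) = ef (Rq (bar w)) (q (t3 p.1.1 p.1.2 p.2)).
Proof.
move: w; apply: (talg_ind HT).
- apply: sub_eq => p.
    move=> a x y; rewrite mulrDr -scalerAr (t3l3 p.1.1 p.1.2) Hq //.
  exact: (ef_lin_l _ (lin_compf (h1 := Rq) RqL HbarL)).
- by move=> p; rewrite mulr1 Hbar1 Rq1 ef_one.
- move=> a b Ha Hb [[u v] w'] /=; rewrite mulrA.
  have /= -> := Hb (u, v, w' * a); have /= -> := Ha (u, v, w').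
  by rewrite HbarM RqM ef_mul.
- move=> y [[u v] w'] /=.
  have -> : t3 u v (w' * tau y) = fdl (t3 u v w') (t3 1 y 1) by rewrite fdlt !mulr1.
  by rewrite qdlh Hbartau -/(jp y) Rqj.
Qed.

Lemma chi_psi X : chi (psi X) = q X.
Proof.
apply: (ext3 (lin_compf Hchi Hpsi) Hq) => u v w.
rewrite psit chi_l chi_r chit Lam1 ef_one.
have := q_left u (1, v, w); rewrite /= mulr1 => ->.
have := q_right w (1, v, 1); rewrite /= mul1r => ->.
by [].
Qed.

Lemma chi_phi e : chi (phi e) = e.
Proof. by rewrite /phi chi_psi Hsq. Qed.

Lemma main : exists (l : U -> M -> M) (r : M -> U -> M) (f : M -> U),
    [/\ ((forall u w x, l u (t w x) = t (u * w) x) /\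
         (forall w x y, r (t w x) (j (pi y)) = t w (br x y) + t (w * j (pi y)) x)),
        bimodule l r,
        bimodule_map l r f /\ (forall w x, f (t w x) = w * j (pi x)),
        dialgebra (fun m m' => r m (f m')) (fun m m' => l (f m) m') &
        exists phi : Q -> M,
          [/\ dialg_hom qdl qdr (fun m m' => r m (f m')) (fun m m' => l (f m) m') phi,
              bijective phi &
              forall (w : T) (x : g), phi (q (t3 w x 1)) = t (bar w) x]].
Proof.
exists l, r, f; split.
- split; first exact: lt.
  by move=> w x y; rewrite (rj _ y) rhot.
- split; first by split; [exact: l_linu|exact: Hl].
  split; first by split; [exact: r_linm|exact: r_linu].
  split; first exact: l1.
  split; first by move=> *; apply: lM.
  split; first exact: r1.
  split; first by move=> *; apply: rM.
  exact: lr_comm.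
- split; last exact: ft.
  split; first exact: Hf.
  split; [exact: fl|exact: fr].
- split.
    split=> [m'|m]; first exact: r_linm.
    exact: (lin_compf (r_linu m) Hf).
  split.
    split=> [m'|m]; first exact: (lin_compf (h1 := fun u => l u m') (l_linu m') Hf).
    exact: Hl.
  move=> x y z; split.
  + by rewrite fl -rM.
  + by rewrite fl fr.
  + by rewrite lr_comm.
  + by rewrite fr lM.
  + by rewrite fl lM.
- exists phi; split.
  + split; first exact: phi_lin.
    split; [exact: phi_qdl|exact: phi_qdr].
  + by exists chi; [exact: chi_phi|exact: phi_chi].
  + exact: phi_t3.
Qed.

End Main.



Theorem proposition4p9 (K : fieldType)
  (g : lmodType K) (br : g -> g -> g) (Hg : leibniz_algebra br)
  (L : lmodType K) (brL : L -> L -> L) (pi : g -> L) (HL : is_Lie_quotient br brL pi)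
  (U : algType K) (j : L -> U) (HU : is_UEA brL j)
  (T : algType K) (tau : g -> T) (HT : is_tensor_alg tau)
  (bar : T -> U) (Hbar : alg_hom bar) (Hbartau : forall x, bar (tau x) = j (pi x))
  (F : lmodType K) (t3 : T -> g -> T -> F) (HF : is_tensor3 t3)
  (fdl fdr : F -> F -> F) (Hfree : free_dialg_products tau t3 fdl fdr)
  (Q : lmodType K) (qdl qdr : Q -> Q -> Q) (q : F -> Q)
  (HQ : is_Ud_quotient br t3 fdl fdr qdl qdr q)
  (M : lmodType K) (t : U -> g -> M) (HM : is_tensor2 t) :
  exists (l : U -> M -> M) (r : M -> U -> M) (f : M -> U),
    [/\ ((forall u w x, l u (t w x) = t (u * w) x) /\
         (forall w x y, r (t w x) (j (pi y)) = t w (br x y) + t (w * j (pi y)) x)),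
        bimodule l r,
        bimodule_map l r f /\ (forall w x, f (t w x) = w * j (pi x)),
        dialgebra (fun m m' => r m (f m')) (fun m m' => l (f m) m') &
        exists phi : Q -> M,
          [/\ dialg_hom qdl qdr (fun m m' => r m (f m')) (fun m m' => l (f m) m') phi,
              bijective phi &
              forall (w : T) (x : g), phi (q (t3 w x 1)) = t (bar w) x]].
Proof. exact: (main Hg HL HU HT Hbar Hbartau HF Hfree HQ HM). Qed.
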